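(* Let $F:\mathbb{R}^N\to\mathbb{R}\cup\{+\infty\}$ be convex, proper and lower semicontinuous, $A\in C^1(\operatorname{dom}F;\mathbb{R}^M)$, $J(x):=\frac12\|A(x)\|^2+F(x)$, and for $z^k\in\operatorname{dom}F$ let $J_k(x):=\frac12\|A(z^k)+\nabla A(z^k)^*(x-z^k)\|^2+F(x)$. (a) Let $\rho>0$ and let $\tilde x^k$ be such that some $e^k\in\partial J_k(\tilde x^k)$ satisfies $\|e^k\|\le\rho\|\tilde x^k-z^k\|$. Put $q^k:=e^k-\nabla A(z^k)[A(z^k)+\nabla A(z^k)^*(\tilde x^k-z^k)]\in\partial F(\tilde x^k)$. Suppose that $$F(z^k)-F(\tilde x^k)\ge\langle q^k,z^k-\tilde x^k\rangle+\tfrac12\|z^k-\tilde x^k\|_{\Gamma_k}^2$$ for some symmetric operator $\Gamma_k$ with $\nabla A(z^k)\nabla A(z^k)^*+\Gamma_k\ge(2\rho+\beta)\mathrm{Id}$ for some $\beta>0$. Then $$J(z^k)-J_k(\tilde x^k)\ge\tfrac\beta2\|\tilde x^k-z^k\|^2.$$ (b) Suppose moreover that Assumption 2.1 holds for $z^0$, that $\varepsilon\in(0,\beta)$ and $w$ satisfies $0<w\le\min\{1,\ \mathfrak d/\sqrt{2\beta^{-1}(J(z^0)-\inf F)},\ (\beta-\varepsilon)/(2CA_{\max})\}$, and that the iterates are generated by $z^{k+1}:=(1-w)z^k+w\tilde x^k$, where for every $k$ the point $\tilde x^k$ is an approximate minimiser of $J_k$ (no proximal term) satisfying the accuracy condition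 of (a) with the same $\rho$, and the hypothesis of (a) holds for every $k$ with the same $\beta$. Then: $J(z^k)$ decreases monotonically to some $L\in\mathbb{R}$; every accumulation point $\hat x$ of $\{z^k\}$ is Clarke-critical with $J(\hat x)=L$; and, with $V_L:=\{\hat x\in\operatorname{dom}F\mid0\in\partial_CJ(\hat x),J(\hat x)=L\}$, whenever $V_L=U_1\cup U_2$ with $U_1,U_2$ disjoint closed sets, all accumulation points lie in the same $U_j$ and $\operatorname{dist}(z^k,U_j)\to0$.
   Context: $\nabla A(y)\in\mathbb{R}^{N\times M}$ denotes the transpose of the Jacobian of $A$ at $y$. For a symmetric operator $\Gamma$, $\|x\|_\Gamma^2:=\langle\Gamma x,x\rangle$; operator inequalities $S\ge T$ mean $S-T$ is positive semidefinite. $\partial$ is the convex subdifferential. Assumption 2.1 (for given $z^0$): $\operatorname{lev}_{J(z^0)}J:=\{x\mid J(x)\le J(z^0)\}$ is bounded, $\inf F>-\infty$, $A_{\max}:=\sup_{z\in\operatorname{dom}F}\|A(z)\|<\infty$, and there are $\mathfrak d,C>0$ with $\|A(x)-A(y)-\nabla A(y)^*(x-y)\|\le C\|x-y\|^2$ for all $y\in\operatorname{lev}_{J(z^0)}J$ and $x$ with $\|x-y\|\le\mathfrak d$. Clarke subdifferential: $\partial_CJ(x)=\nabla A(x)A(x)+\partial F(x)$; $x$ is Clarke-critical if $0\in\partial_CJ(x)$. The middle term of the bound on $w$ is $+\infty$ if $J(z^0)=\inf F$. *)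

(* Defs.v *)
From mathcomp Require Import all_boot.
From Stdlib Require Import Reals.
Set Implicit Arguments.
Unset Strict Implicit.
Unset Printing Implicit Defensive.
Local Open Scope R_scope.

Definition vec (n : nat) := 'I_n -> R.
Definition mat (m n : nat) := 'I_m -> 'I_n -> R.

Definition vadd n (x y : vec n) : vec n := fun i => x i + y i.
Definition vsub n (x y : vec n) : vec n := fun i => x i - y i.
Definition vscale n (a : R) (x : vec n) : vec n := fun i => a * x i.
Definition dot n (x y : vec n) : R := \big[Rplus/0]_(i < n) (x i * y i).
Definition norm n (x : vec n) : R := sqrt (dot x x).
Definition mv m n (B : mat m n) (x : vec n) : vec m :=
  fun i => \big[Rplus/0]_(j < n) (B i j * x j).
Definition mtv m n (B : mat m n) (u : vec m) : vec n :=
  fun j => \big[Rplus/0]_(i < m) (B i j * u i).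
Definition symmetric n (G : mat n n) : Prop := forall i j, G i j = G j i.
Definition qform n (G : mat n n) (v : vec n) : R := dot (mv G v) v.

Inductive Rbar := Fin (r : R) | PInf.
Definition Rbar_le (x y : Rbar) : Prop :=
  match x, y with
  | _, PInf => True
  | PInf, Fin _ => False
  | Fin a, Fin b => a <= b
  end.
Definition Rbar_lt (x y : Rbar) : Prop :=
  match x, y with
  | PInf, _ => False
  | Fin _, PInf => True
  | Fin a, Fin b => a < b
  end.
Definition Rbar_addR (r : R) (x : Rbar) : Rbar :=
  match x with Fin a => Fin (r + a) | PInf => PInf end.

Section Defs.
Context {N M : nat}.

Definition in_dom (F : vec N -> Rbar) (x : vec N) : Prop := F x <> PInf.

Definition convex_fun (F : vec N -> Rbar) : Prop :=
  forall (x y : vec N) (fx fy t : R), F x = Fin fx -> F y = Fin fy ->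
    0 <= t <= 1 ->
    Rbar_le (F (vadd (vscale t x) (vscale (1 - t) y))) (Fin (t * fx + (1 - t) * fy)).

Definition proper_fun (F : vec N -> Rbar) : Prop := exists x, in_dom F x.

Definition lsc_fun (F : vec N -> Rbar) : Prop :=
  forall (x : vec N) (r : R), Rbar_lt (Fin r) (F x) ->
    exists delta, 0 < delta /\
      forall y, norm (vsub y x) < delta -> Rbar_lt (Fin r) (F y).

(** A in C^1(dom F; R^M), with jac y the Jacobian of A at y (i.e. the adjoint of nabla A(y)):
    differentiability relative to dom F, and continuity of the Jacobian on dom F. *)
Definition C1_on_dom (F : vec N -> Rbar) (A : vec N -> vec M) (jac : vec N -> mat M N) : Prop :=
  (forall y, in_dom F y -> forall eps, 0 < eps -> exists delta, 0 < delta /\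
     forall x, in_dom F x -> norm (vsub x y) < delta ->
       norm (vsub (vsub (A x) (A y)) (mv (jac y) (vsub x y))) <= eps * norm (vsub x y)) /\
  (forall y, in_dom F y -> forall eps, 0 < eps -> exists delta, 0 < delta /\
     forall x, in_dom F x -> norm (vsub x y) < delta ->
       forall i j, Rabs (jac x i j - jac y i j) < eps).

Definition Jfun (A : vec N -> vec M) (F : vec N -> Rbar) (x : vec N) : Rbar :=
  Rbar_addR (/ 2 * norm (A x) ^ 2) (F x).

Definition linA (A : vec N -> vec M) (jac : vec N -> mat M N) (z x : vec N) : vec M :=
  vadd (A z) (mv (jac z) (vsub x z)).

Definition Jlin (A : vec N -> vec M) (jac : vec N -> mat M N) (F : vec N -> Rbar)
  (z x : vec N) : Rbar :=
  Rbar_addR (/ 2 * norm (linA A jac z x) ^ 2) (F x).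

Definition subdiff (G : vec N -> Rbar) (x e : vec N) : Prop :=
  exists gx, G x = Fin gx /\
    forall y, Rbar_le (Fin (gx + dot e (vsub y x))) (G y).

(** x is Clarke-critical: 0 \in nabla A(x) A(x) + dF(x) *)
Definition clarke_critical (A : vec N -> vec M) (jac : vec N -> mat M N)
  (F : vec N -> Rbar) (x : vec N) : Prop :=
  subdiff F x (vscale (-1) (mtv (jac x) (A x))).

Definition qvec (A : vec N -> vec M) (jac : vec N -> mat M N) (z xt e : vec N) : vec N :=
  vsub e (mtv (jac z) (linA A jac z xt)).

Definition hypA (A : vec N -> vec M) (jac : vec N -> mat M N) (F : vec N -> Rbar)
  (rho beta : R) (z xt e : vec N) (Gam : mat N N) : Prop :=
  in_dom F z /\
  subdiff (Jlin A jac F z) xt e /\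
  norm e <= rho * norm (vsub xt z) /\
  symmetric Gam /\
  (forall v : vec N,
     dot (mtv (jac z) (mv (jac z) v)) v + qform Gam v >= (2 * rho + beta) * norm v ^ 2) /\
  Rbar_le (Rbar_addR (dot (qvec A jac z xt e) (vsub z xt) + / 2 * qform Gam (vsub z xt)) (F xt))
          (F z).

Definition bounded_set (S : vec N -> Prop) : Prop :=
  exists R0, forall x, S x -> norm x <= R0.

Definition is_inf_of (F : vec N -> Rbar) (m : R) : Prop :=
  (forall x, Rbar_le (Fin m) (F x)) /\
  (forall m', (forall x, Rbar_le (Fin m') (F x)) -> m' <= m).

Definition is_sup_normA (F : vec N -> Rbar) (A : vec N -> vec M) (Amax : R) : Prop :=
  (forall z, in_dom F z -> norm (A z) <= Amax) /\
  (forall b, (forall z, in_dom F z -> norm (A z) <= b) -> Amax <= b).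

Definition accum_pt (z : nat -> vec N) (x : vec N) : Prop :=
  forall eps, 0 < eps -> forall K, exists k, (K <= k)%nat /\ norm (vsub (z k) x) < eps.

Definition closed_vset (U : vec N -> Prop) : Prop :=
  forall x, (forall eps, 0 < eps -> exists u, U u /\ norm (vsub x u) < eps) -> U x.

Definition dist_to_0 (z : nat -> vec N) (U : vec N -> Prop) : Prop :=
  forall eps, 0 < eps -> exists K, forall k, (K <= k)%nat ->
    exists u, U u /\ norm (vsub (z k) u) < eps.

Definition Rbar_cv (u : nat -> Rbar) (L : R) : Prop :=
  forall eps, 0 < eps -> exists K, forall k, (K <= k)%nat ->
    exists r, u k = Fin r /\ Rabs (r - L) < eps.

End Defs.

(* Main.v *)
From HB Require Import structures.
Require Import Defs.
From Stdlib Require Import Reals Lra Psatz FunctionalExtensionality ClassicalEpsilon Classical.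
From mathcomp Require Import all_boot.
Local Open Scope R_scope.
Set Warnings "-notation-overridden -redundant-canonical-projection".

Lemma Rplus_assoc' : associative Rplus. Proof. move=> *; ring. Qed.
HB.instance Definition _ := Monoid.isComLaw.Build R 0 Rplus Rplus_assoc' Rplus_comm Rplus_0_l.

Lemma sum_recr m (F : 'I_m.+1 -> R) : \big[Rplus/0]_(i < m.+1) F i =
  \big[Rplus/0]_(i < m) F (widen_ord (leqnSn m) i) + F ord_max.
Proof. exact: big_ord_recr. Qed.
Lemma sum0 (F : 'I_0 -> R) : \big[Rplus/0]_(i < 0) F i = 0.
Proof. exact: big_ord0. Qed.

Section VecLib.
Context {n : nat}.
Implicit Types (x y : vec n) (f g : 'I_n -> R).

Lemma sum_scal (a : R) f : \big[Rplus/0]_(i < n) (a * f i) = a * \big[Rplus/0]_(i < n) f i.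
Proof. elim/big_rec2: _ => [|i y1 y2 _ ->]; ring. Qed.

Lemma sum_le f g : (forall i, f i <= g i) ->
  \big[Rplus/0]_(i < n) f i <= \big[Rplus/0]_(i < n) g i.
Proof. move=> H; elim/big_rec2: _ => [|i y1 y2 _]; [lra| have := H i; lra]. Qed.

Lemma sum_ge0 f : (forall i, 0 <= f i) -> 0 <= \big[Rplus/0]_(i < n) f i.
Proof. move=> H; elim/big_rec: _ => [|i y _]; [lra| have := H i; lra]. Qed.

Lemma sum_abs f : Rabs (\big[Rplus/0]_(i < n) f i) <= \big[Rplus/0]_(i < n) Rabs (f i).
Proof.
elim/big_rec2: _ => [|i y1 y2 _ H]; first by rewrite Rabs_R0; lra.
have := Rabs_triang (f i) y2; lra.
Qed.

Lemma sum_add f g : \big[Rplus/0]_(i < n) (f i + g i) =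
  \big[Rplus/0]_(i < n) f i + \big[Rplus/0]_(i < n) g i.
Proof. exact: big_split. Qed.

Lemma sum_opp f : \big[Rplus/0]_(i < n) (- f i) = - \big[Rplus/0]_(i < n) f i.
Proof. elim/big_rec2: _ => [|i y1 y2 _ ->]; ring. Qed.

Lemma sum_sub f g : \big[Rplus/0]_(i < n) (f i - g i) =
  \big[Rplus/0]_(i < n) f i - \big[Rplus/0]_(i < n) g i.
Proof. rewrite /Rminus sum_add sum_opp //. Qed.

Lemma sum_ext f g : (forall i, f i = g i) ->
  \big[Rplus/0]_(i < n) f i = \big[Rplus/0]_(i < n) g i.
Proof. by move=> H; apply: eq_bigr => i _. Qed.

Lemma sum_single f (i0 : 'I_n) : (forall i, 0 <= f i) -> f i0 <= \big[Rplus/0]_(i < n) f i.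
Proof.
move=> H; rewrite (bigD1 i0) //=.
have h : 0 <= \big[Rplus/0]_(i < n | i != i0) f i.
  elim/big_rec: _ => [|i y _]; [lra| have := H i; lra].
have := Rplus_le_compat_l (f i0) _ _ h; rewrite Rplus_0_r; exact.
Qed.

Lemma dot_sym x y : dot x y = dot y x.
Proof. apply: sum_ext => i; ring. Qed.

Lemma dot_addl x y z : dot (vadd x y) z = dot x z + dot y z.
Proof. rewrite /dot -sum_add; apply: sum_ext => i; rewrite /vadd; ring. Qed.
Lemma dot_subl x y z : dot (vsub x y) z = dot x z - dot y z.
Proof. rewrite /dot -sum_sub; apply: sum_ext => i; rewrite /vsub; ring. Qed.
Lemma dot_scall a x z : dot (vscale a x) z = a * dot x z.
Proof. rewrite /dot -sum_scal; apply: sum_ext => i; rewrite /vscale; ring. Qed.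
Lemma dot_addr x y z : dot z (vadd x y) = dot z x + dot z y.
Proof. by rewrite dot_sym dot_addl !(dot_sym z). Qed.
Lemma dot_subr x y z : dot z (vsub x y) = dot z x - dot z y.
Proof. by rewrite dot_sym dot_subl !(dot_sym z). Qed.
Lemma dot_scalr a x z : dot z (vscale a x) = a * dot z x.
Proof. by rewrite dot_sym dot_scall !(dot_sym z). Qed.

Lemma dot_ge0 x : 0 <= dot x x.
Proof. apply: sum_ge0 => i; nra. Qed.

Lemma norm_ge0 x : 0 <= norm x.
Proof. exact: sqrt_pos. Qed.

Lemma norm_sq x : norm x ^ 2 = dot x x.
Proof. rewrite /norm /= Rmult_1_r sqrt_sqrt //; exact: dot_ge0. Qed.

Lemma CS_sq x y : (dot x y)^2 <= dot x x * dot y y.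
Proof.
set a := dot x x; set b := dot y y; set c := dot x y.
have Ht : forall t, 0 <= a - 2 * t * c + t^2 * b.
  move=> t; have := dot_ge0 (vsub x (vscale t y)).
  rewrite dot_subl !dot_subr !dot_scall !dot_scalr (dot_sym y x) -/a -/b -/c; nra.
have hb := dot_ge0 y; have ha := dot_ge0 x; rewrite -/a -/b in ha hb.
case: (Req_dec b 0) => Hb.
  case: (Req_dec c 0) => Hc; first by rewrite Hc Hb; nra.
  have := Ht ((a + 1) / (2 * c)). rewrite Hb.
  have -> : a - 2 * ((a + 1) / (2 * c)) * c + ((a + 1) / (2 * c)) ^ 2 * 0 = -1
    by field.
  lra.
have := Ht (c / b).
have -> : a - 2 * (c / b) * c + (c / b) ^ 2 * b = (a * b - c^2) / b by field.
move=> H.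
have hb' : 0 < b by lra.
have : 0 <= (a * b - c ^ 2) / b * b by nra.
have -> : (a * b - c ^ 2) / b * b = a * b - c^2 by field.
lra.
Qed.

Lemma CS x y : dot x y <= norm x * norm y.
Proof.
rewrite /norm -sqrt_mult; try exact: dot_ge0.
apply: Rle_trans (Rle_abs _) _.
rewrite -sqrt_Rsqr_abs; apply: sqrt_le_1_alt.
rewrite /Rsqr; have := CS_sq x y; simpl; lra.
Qed.

Lemma CS_abs x y : Rabs (dot x y) <= norm x * norm y.
Proof.
have H1 := CS x y.
have H2 := CS (vscale (-1) x) y.
rewrite dot_scall in H2.
have E : norm (vscale (-1) x) = norm x.
  rewrite /norm; congr sqrt; rewrite dot_scall dot_scalr; ring.
rewrite E in H2; apply: Rabs_le; lra.
Qed.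

End VecLib.
Section VecLib2.
Context {n : nat}.
Implicit Types (x y : vec n) (f g : 'I_n -> R).

Lemma vext x y : (forall i, x i = y i) -> x = y.
Proof. move=> H; exact: functional_extensionality. Qed.

Lemma norm_eq x y : dot x x = dot y y -> norm x = norm y.
Proof. by rewrite /norm => ->. Qed.

Lemma norm_scale a x : norm (vscale a x) = Rabs a * norm x.
Proof.
rewrite /norm dot_scall dot_scalr -Rmult_assoc sqrt_mult; first last.
- exact: dot_ge0.
- nra.
congr (_ * _); rewrite -sqrt_Rsqr_abs /Rsqr //.
Qed.

Lemma norm_opp_sub x y : norm (vsub x y) = norm (vsub y x).
Proof. apply: norm_eq; rewrite !dot_subl !dot_subr (dot_sym x y); ring. Qed.

Lemma norm_add x y : norm (vadd x y) <= norm x + norm y.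
Proof.
have hx := norm_ge0 x; have hy := norm_ge0 y.
rewrite {1}/norm -(sqrt_pow2 (norm x + norm y)); last lra.
apply: sqrt_le_1_alt.
rewrite dot_addl !dot_addr.
have := CS x y; have := norm_sq x; have := norm_sq y; rewrite (dot_sym y x); nra.
Qed.

Lemma norm_tri x y z : norm (vsub x z) <= norm (vsub x y) + norm (vsub y z).
Proof.
have -> : vsub x z = vadd (vsub x y) (vsub y z) by apply: vext => i; rewrite /vsub/vadd; ring.
exact: norm_add.
Qed.

Lemma norm_sub_le x y : norm (vsub x y) <= norm x + norm y.
Proof.
have -> : vsub x y = vadd x (vscale (-1) y) by apply: vext => i; rewrite /vsub/vadd/vscale; ring.
apply: Rle_trans (norm_add _ _) _; rewrite norm_scale Rabs_Ropp Rabs_R1; lra.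
Qed.

Lemma coord_le x i : Rabs (x i) <= norm x.
Proof.
rewrite /norm -sqrt_Rsqr_abs; apply: sqrt_le_1_alt.
rewrite /Rsqr /dot; apply: (sum_single (fun j => x j * x j) i) => j; nra.
Qed.

Lemma sumsq_le m (f : 'I_m -> R) :
  \big[Rplus/0]_(i < m) (f i * f i) <= (\big[Rplus/0]_(i < m) Rabs (f i))^2.
Proof.
elim: m f => [|m IH] f; first by rewrite !sum0; simpl; lra.
rewrite !sum_recr.
have h1 := IH (fun i => f (widen_ord (leqnSn m) i)).
have h2 : 0 <= \big[Rplus/0]_(i < m) Rabs (f (widen_ord (leqnSn m) i)).
  elim/big_rec: _ => [|i y _]; [lra| have := Rabs_pos (f (widen_ord (leqnSn m) i)); lra].
have h3 := Rabs_pos (f ord_max).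
have h4 : f ord_max * f ord_max = Rabs (f ord_max) * Rabs (f ord_max).
  rewrite -Rabs_mult Rabs_right //; nra.
move: h1 h2 h3 h4. set S1 := \big[Rplus/0]_(i < m) (_ * _). set S2 := \big[Rplus/0]_(i < m) Rabs _. move=> h1 h2 h3 h4. simpl in *. nra.
Qed.

Lemma norm_le_sum x : norm x <= \big[Rplus/0]_(i < n) Rabs (x i).
Proof.
rewrite /norm -(sqrt_pow2 (\big[Rplus/0]_(i < n) Rabs (x i))); last first.
  apply: sum_ge0 => i; exact: Rabs_pos.
apply: sqrt_le_1_alt; exact: sumsq_le.
Qed.

End VecLib2.

Section MatLib.
Context {m n : nat}.
Implicit Types (B : mat m n) (x y : vec n) (u : vec m).

Lemma mv_add B x y : mv B (vadd x y) = vadd (mv B x) (mv B y).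
Proof. apply: vext => i; rewrite /mv/vadd -sum_add; apply: sum_ext => j; ring. Qed.
Lemma mv_sub B x y : mv B (vsub x y) = vsub (mv B x) (mv B y).
Proof. apply: vext => i; rewrite /mv/vsub -sum_sub; apply: sum_ext => j; ring. Qed.
Lemma mv_scale B a x : mv B (vscale a x) = vscale a (mv B x).
Proof. apply: vext => i; rewrite /mv/vscale -sum_scal; apply: sum_ext => j; ring. Qed.

Lemma adjoint B u x : dot (mtv B u) x = dot u (mv B x).
Proof.
rewrite /dot /mtv /mv.
transitivity (\big[Rplus/0]_(j < n) \big[Rplus/0]_(i < m) (B i j * u i * x j)).
  apply: sum_ext => j; rewrite Rmult_comm -sum_scal; apply: sum_ext => i; ring.
rewrite exchange_big; apply: sum_ext => i; rewrite -sum_scal; apply: sum_ext => j; ring.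
Qed.

Lemma mv_bound B : exists K, 0 <= K /\ forall x, norm (mv B x) <= K * norm x.
Proof.
exists (\big[Rplus/0]_(i < m) \big[Rplus/0]_(j < n) Rabs (B i j)).
split. apply: sum_ge0 => i; apply: sum_ge0 => j; exact: Rabs_pos.
move=> x; apply: Rle_trans (norm_le_sum _) _.
rewrite Rmult_comm -sum_scal; apply: sum_le => i.
rewrite /mv; apply: Rle_trans (sum_abs _) _.
rewrite -sum_scal; apply: sum_le => j.
rewrite Rabs_mult; have := coord_le x j; have := Rabs_pos (B i j); nra.
Qed.

End MatLib.
Ltac genbig := repeat match goal with
 | |- context [@bigop.body ?R ?I ?idx ?r ?F] =>
     let x := fresh "S" in set x := (@bigop.body R I idx r F) in *
 | H : context [@bigop.body ?R ?I ?idx ?r ?F] |- _ =>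
     let x := fresh "S" in set x := (@bigop.body R I idx r F) in * end.

Lemma Un_cv_ext (u v : nat -> R) l : (forall k, u k = v k) -> Un_cv u l -> Un_cv v l.
Proof. move=> H Hu eps He; case: (Hu eps He) => K HK; exists K => k Hk; rewrite -H; auto. Qed.

Lemma cv_const (c : R) : Un_cv (fun _ => c) c.
Proof. move=> eps He; exists 0%nat => k _; rewrite /R_dist Rminus_diag_eq // Rabs_R0; lra. Qed.

Lemma cv_sum n (F : nat -> 'I_n -> R) (l : 'I_n -> R) :
  (forall i, Un_cv (fun k => F k i) (l i)) ->
  Un_cv (fun k => \big[Rplus/0]_(i < n) F k i) (\big[Rplus/0]_(i < n) l i).
Proof.
elim: n F l => [|n IH] F l H.
  rewrite sum0; apply: (Un_cv_ext (fun _ => 0)); last exact: cv_const.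
  by move=> k; rewrite sum0.
rewrite sum_recr; apply: (Un_cv_ext (fun k => \big[Rplus/0]_(i < n) F k (widen_ord (leqnSn n) i) + F k ord_max)).
  by move=> k; rewrite sum_recr.
apply: CV_plus; last exact: H.
exact: (IH (fun k i => F k (widen_ord (leqnSn n) i))).
Qed.

Lemma cv_abs_le (u : nat -> R) l : Un_cv u l <-> Un_cv (fun k => Rabs (u k - l)) 0.
Proof.
split=> H eps He; case: (H eps He) => K HK; exists K => k Hk; have := HK k Hk;
  rewrite /R_dist Rminus_0_r Rabs_Rabsolu //.
Qed.

Lemma cv_squeeze (u v : nat -> R) : (forall k, 0 <= u k <= v k) -> Un_cv v 0 -> Un_cv u 0.
Proof.
move=> H Hv eps He; case: (Hv eps He) => K HK; exists K => k Hk; have := HK k Hk.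
rewrite /R_dist !Rminus_0_r => h2; have h1 := H k.
rewrite Rabs_right in h2; last lra. rewrite Rabs_right; lra.
Qed.

Lemma incr_ge (phi : nat -> nat) : (forall k, (phi k < phi k.+1)%nat) -> forall k, (k <= phi k)%nat.
Proof. move=> H; elim=> [|k IH] //; exact: leq_ltn_trans IH (H k). Qed.

Arguments incr_ge {phi}.
Lemma incr_mono (phi : nat -> nat) : (forall k, (phi k < phi k.+1)%nat) ->
  forall a b, (a <= b)%nat -> (phi a <= phi b)%nat.
Proof.
move=> H a b /subnK <-; elim: (b - a)%nat => [|c IH] //=.
rewrite addSn; apply: leq_trans IH _; exact: ltnW (H _).
Qed.

Arguments incr_mono {phi}.
Lemma cv_subseq (u : nat -> R) l (phi : nat -> nat) : (forall k, (phi k < phi k.+1)%nat) ->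
  Un_cv u l -> Un_cv (fun k => u (phi k)) l.
Proof.
move=> Hphi H eps He; case: (H eps He) => K HK; exists K => k /leP Hk; apply: HK.
apply/leP; exact: leq_trans Hk (incr_ge Hphi k).
Qed.

Lemma cv_ge (u : nat -> R) l (K : nat) eps : Un_cv u l -> 0 < eps ->
  exists K', (K <= K')%nat /\ forall k, (K' <= k)%nat -> Rabs (u k - l) < eps.
Proof.
move=> H He; case: (H eps He) => K0 HK0; exists (maxn K K0); split; first exact: leq_maxl.
move=> k Hk; apply: HK0; apply/leP; apply: leq_trans Hk; exact: leq_maxr.
Qed.

Lemma extract (P : nat -> nat -> Prop) : (forall k K, exists p, (K <= p)%nat /\ P k p) ->
  exists phi : nat -> nat, (forall k, (phi k < phi k.+1)%nat) /\ forall k, P k (phi k).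
Proof.
move=> H.
have H' : forall k K, {p | (K <= p)%nat /\ P k p}.
  move=> k K; apply: constructive_indefinite_description; exact: H.
pose g k K := proj1_sig (H' k K).
have Hg k K : (K <= g k K)%nat /\ P k (g k K) by exact: proj2_sig (H' k K).
pose fix phi k := match k with 0 => g 0%nat 0%nat | S k' => g k (phi k').+1 end.
exists phi; split.
  move=> k /=; exact: (Hg _ _).1.
by case=> [|k] /=; apply: (Hg _ _).2.
Qed.

Definition vcv {n} (u : nat -> vec n) (x : vec n) := Un_cv (fun k => norm (vsub (u k) x)) 0.

Lemma vcv_coord {n} (u : nat -> vec n) x : vcv u x -> forall i, Un_cv (fun k => u k i) (x i).
Proof.
move=> H i; apply/cv_abs_le; apply: (cv_squeeze _ _ _ H) => k; split; first exact: Rabs_pos.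
exact: (coord_le (vsub (u k) x) i).
Qed.

Lemma coord_vcv {n} (u : nat -> vec n) x : (forall i, Un_cv (fun k => u k i) (x i)) -> vcv u x.
Proof.
move=> H; apply: (cv_squeeze (fun k => norm (vsub (u k) x)) (fun k => \big[Rplus/0]_(i < n) Rabs (u k i - x i))).
  move=> k; split; [exact: norm_ge0| exact: norm_le_sum].
have H0 : \big[Rplus/0]_(i < n) (fun _ : 'I_n => 0) i = 0.
  by elim/big_rec: _ => [|i y _ ->]; ring.
have Hs := cv_sum _ (fun k i => Rabs (u k i - x i)) (fun _ => 0).
rewrite H0 in Hs; apply: Hs => i; exact: (proj1 (cv_abs_le _ _) (H i)).
Qed.

Lemma vcv_subseq {n} (u : nat -> vec n) x phi : (forall k, (phi k < phi k.+1)%nat) ->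
  vcv u x -> vcv (fun k => u (phi k)) x.
Proof. move=> Hp H; exact: (cv_subseq (fun k => norm (vsub (u k) x)) 0 phi Hp H). Qed.

Lemma accum_extract {n} (z : nat -> vec n) x : accum_pt z x ->
  exists phi, (forall k, (phi k < phi k.+1)%nat) /\ vcv (fun k => z (phi k)) x.
Proof.
move=> H.
case: (extract (fun k p => norm (vsub (z p) x) < / INR k.+1)).
  move=> k K; case: (H (/ INR k.+1) _ K); last by move=> p [Hp1 Hp2]; exists p; split => //; apply/leP.
  apply: Rinv_0_lt_compat; apply: lt_0_INR; apply/ltP; done.
move=> phi [Hphi Hp]; exists phi; split => // eps He.
case: (archimed_cor1 eps He) => K0 [HK0 HK0p].
exists K0 => k /leP Hk; rewrite /R_dist Rminus_0_r Rabs_right; last first.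
  apply: Rle_ge; exact: norm_ge0.
apply: Rlt_trans (Hp k) _; apply: Rle_lt_trans _ HK0.
have h0 : 0 < INR K0 := lt_0_INR _ HK0p.
apply: Rinv_le_contravar => //.
rewrite S_INR; have := le_INR _ _ (elimT leP Hk); lra.
Qed.
Lemma extract_cv (v : nat -> R) :
  (forall eps, 0 < eps -> forall K, exists p, (K <= p)%nat /\ Rabs (v p) < eps) ->
  exists phi, (forall k, (phi k < phi k.+1)%nat) /\ Un_cv (fun k => v (phi k)) 0.
Proof.
move=> H.
case: (extract (fun k p => Rabs (v p) < / INR k.+1)).
  move=> k K; apply: H; apply: Rinv_0_lt_compat; apply: lt_0_INR; apply/ltP; done.
move=> phi [Hphi Hp]; exists phi; split => // eps He.
case: (archimed_cor1 eps He) => K0 [HK0 HK0p].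
exists K0 => k /leP Hk; rewrite /R_dist Rminus_0_r.
apply: Rlt_trans (Hp k) _; apply: Rle_lt_trans _ HK0.
have h0 : 0 < INR K0 := lt_0_INR _ HK0p.
apply: Rinv_le_contravar => //.
rewrite S_INR; have := le_INR _ _ (elimT leP Hk); lra.
Qed.

Lemma incr_strict (phi : nat -> nat) : (forall k, (phi k < phi k.+1)%nat) ->
  forall a b, (a < b)%nat -> (phi a < phi b)%nat.
Proof. move=> H a b Hab; exact: leq_trans (H a) (incr_mono H _ _ Hab). Qed.

Lemma BW_real (u : nat -> R) R0 : (forall k, Rabs (u k) <= R0) ->
  exists l phi, (forall k, (phi k < phi k.+1)%nat) /\ Un_cv (fun k => u (phi k)) l.
Proof.
move=> Hb.
case: (Bolzano_Weierstrass u (fun c => - R0 <= c <= R0) (compact_P3 _ _)).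
  move=> k; have := Hb k; rewrite /Rabs; case: Rcase_abs; lra.
move=> l Hl; exists l.
case: (extract_cv (fun k => u k - l)).
  move=> eps He K.
  have Hn : neighbourhood (fun y => Rabs (y - l) < eps) l.
    exists (mkposreal eps He) => y; rewrite /disc /=; done.
  case: (Hl _ K Hn) => p [Hp1 Hp2]; exists p; split => //; exact/leP.
move=> phi [Hphi Hc]; exists phi; split => //.
move=> eps He; case: (Hc eps He) => K HK; exists K => k Hk; have := HK k Hk; rewrite /R_dist Rminus_0_r //.
Qed.

Lemma BW_vec {n} (u : nat -> vec n) R0 (Q : nat -> Prop) :
  (forall k, norm (u k) <= R0) -> (forall K, exists k, (K <= k)%nat /\ Q k) ->
  exists x, forall eps, 0 < eps -> forall K, exists k, (K <= k)%nat /\ Q k /\ norm (vsub (u k) x) < eps.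
Proof.
move=> Hb HQ.
case: (extract (fun _ p => Q p)) => [k K|psi [Hpsi HQpsi]]; first exact: HQ.
pose v k := u (psi k).
have Hj : forall j, exists phi x, (forall k, (phi k < phi k.+1)%nat) /\
    forall i : 'I_n, (i < j)%nat -> Un_cv (fun k => v (phi k) i) (x i).
  elim=> [|j [phi [x [Hphi Hx]]]].
    by exists id, (fun _ => 0); split => // k.
  case: (ltnP j n) => Hjn; last first.
    exists phi, x; split => // i Hi; apply: Hx; exact: leq_trans (ltn_ord i) Hjn.
  pose i0 := Ordinal Hjn.
  case: (BW_real (fun k => v (phi k) i0) R0).
    move=> k; apply: Rle_trans (coord_le _ _) (Hb _).
  move=> l [phi2 [Hphi2 Hl]].
  exists (fun k => phi (phi2 k)), (fun i => if i == i0 then l else x i); split.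
    move=> k; exact: incr_strict Hphi _ _ (Hphi2 k).
  move=> i Hi; case: eqP => [->|Hne]; first exact: Hl.
  apply: (cv_subseq (fun k => v (phi k) i) (x i) phi2 Hphi2); apply: Hx.
  rewrite ltnS leq_eqVlt in Hi; case/orP: Hi => [/eqP Hi|//].
  by exfalso; apply: Hne; apply: val_inj.
case: (Hj n) => phi [x [Hphi Hx]]; exists x => eps He K.
have Hc : vcv (fun k => v (phi k)) x by apply: coord_vcv => i; apply: Hx.
case: (cv_ge _ _ K eps Hc He) => K' [HK' HK'2].
exists (psi (phi K')); split; last split.
- apply: leq_trans HK' (leq_trans (incr_ge Hphi K') (incr_ge Hpsi _)).
- exact: HQpsi.
- have := HK'2 K' (leqnn _); rewrite Rminus_0_r Rabs_right //; apply: Rle_ge; exact: norm_ge0.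
Qed.
Lemma dom_fin {N} (F : vec N -> Rbar) x : in_dom F x -> exists r, F x = Fin r.
Proof. rewrite /in_dom; case: (F x) => [r|] H; [by exists r| by case: H]. Qed.

Lemma qform_opp {N} (G : mat N N) v : qform G (vscale (-1) v) = qform G v.
Proof. rewrite /qform mv_scale dot_scall dot_scalr; ring. Qed.

Lemma vsub_swap {N} (x y : vec N) : vsub y x = vscale (-1) (vsub x y).
Proof. apply: vext => i; rewrite /vsub /vscale; ring. Qed.

Lemma norm_sq1 {N} (x : vec N) : norm x * (norm x * 1) = dot x x.
Proof. by rewrite -norm_sq. Qed.

Lemma norm_vadd_sq {N} (x y : vec N) : norm (vadd x y) ^ 2 = norm x ^ 2 + 2 * dot x y + norm y ^ 2.
Proof. rewrite !norm_sq dot_addl !dot_addr (dot_sym y x); ring. Qed.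

Lemma partA {N M} (F : vec N -> Rbar) (A : vec N -> vec M) jac rho beta z xt e Gam :
  0 < rho -> 0 < beta -> hypA A jac F rho beta z xt e Gam ->
  Rbar_le (Rbar_addR (beta / 2 * norm (vsub xt z) ^ 2) (Jlin A jac F z xt)) (Jfun A F z).
Proof.
move=> Hr Hb [Hz [[gx [HJ Hsub]] [He [Hsym [HG Hineq]]]]].
case: (dom_fin _ _ Hz) => fz Fz.
move: HJ Hineq; rewrite /Jlin /Jfun Fz; case Fxt: (F xt) => [fx|] //= [HJ] Hineq.
have Hl : linA A jac z xt = vadd (A z) (mv (jac z) (vsub xt z)) by [].
rewrite /qvec Hl (vsub_swap xt z) qform_opp dot_scalr dot_subl adjoint dot_addl in Hineq.
rewrite Hl.
move: (vsub xt z) He Hineq HG => h He Hineq HG.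
rewrite !norm_sq1 dot_addl !dot_addr (dot_sym (mv (jac z) h) (A z)).
have HG' := HG h; rewrite adjoint in HG'.
have Hdot : dot e h <= rho * norm h ^ 2.
  apply: Rle_trans (CS e h) _; have := norm_ge0 h; have := norm_ge0 e; nra.
rewrite !norm_sq in HG' Hdot.
nra.
Qed.
Lemma subgrad_F {N M} (F : vec N -> Rbar) (A : vec N -> vec M) jac z xt e gx fx :
  convex_fun F -> Jlin A jac F z xt = Fin gx ->
  (forall y, Rbar_le (Fin (gx + dot e (vsub y xt))) (Jlin A jac F z y)) ->
  F xt = Fin fx ->
  forall y, Rbar_le (Fin (fx + dot (qvec A jac z xt e) (vsub y xt))) (F y).
Proof.
move=> Hconv HJ Hsub Fxt y.
case Fy: (F y) => [fy|] //; cbn [Rbar_le].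
rewrite /Jlin Fxt in HJ; cbn [Rbar_addR] in HJ; case: HJ => HJ.
have Hq : dot (qvec A jac z xt e) (vsub y xt) =
    dot e (vsub y xt) - dot (linA A jac z xt) (mv (jac z) (vsub y xt)).
  by rewrite /qvec dot_subl adjoint.
rewrite Hq.
move: HJ Hq Hsub; set c := linA A jac z xt => HJ Hq Hsub.
set d := vsub y xt.
set b := dot (mv (jac z) d) (mv (jac z) d).
have Hb : 0 <= b by apply: dot_ge0.
have Hclaim : forall t, 0 < t <= 1 ->
    t * (dot e d - dot c (mv (jac z) d)) <= t * (fy - fx) + t^2 / 2 * b.
  move=> t Ht.
  pose yt := vadd (vscale t y) (vscale (1 - t) xt).
  have Hc := Hconv y xt fy fx t Fy Fxt (conj (Rlt_le _ _ (proj1 Ht)) (proj2 Ht)).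
  rewrite -/yt in Hc.
  case Fyt: (F yt) Hc => [fyt|] // Hc; cbn [Rbar_le] in Hc.
  have Hs := Hsub yt.
  rewrite /Jlin Fyt in Hs; cbn [Rbar_addR Rbar_le] in Hs.
  have E1 : vsub yt xt = vscale t d.
    by apply: vext => i; rewrite /yt /d /vsub /vadd /vscale; ring.
  have E2 : linA A jac z yt = vadd c (vscale t (mv (jac z) d)).
    rewrite /linA.
    have -> : vsub yt z = vadd (vsub xt z) (vscale t d).
      by apply: vext => i; rewrite /yt /d /vsub /vadd /vscale; ring.
    rewrite mv_add mv_scale; apply: vext => i; rewrite /c /linA /vadd; ring.
  rewrite E1 E2 dot_scalr norm_vadd_sq norm_scale dot_scalr Rabs_right in Hs; last lra.
  have : norm (mv (jac z) d) ^ 2 = b by rewrite norm_sq.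
  move: Hs; rewrite -HJ.
  move: (norm c) (norm (mv (jac z) d)) (dot e d) (dot c (mv (jac z) d)) => nc nd ed cd Hs Hnd.
  nra.
apply: Rnot_lt_le => Hlt.
set del := fx + (dot e d - dot c (mv (jac z) d)) - fy.
have Hdel : 0 < del by rewrite /del; lra.
set t := Rmin 1 (del / (b + 1)).
have Ht0 : 0 < t.
  rewrite /t; apply: Rmin_pos; first lra; apply: Rdiv_lt_0_compat; lra.
have Ht1 : t <= 1 by apply: Rmin_l.
have Ht2 : t <= del / (b + 1) by apply: Rmin_r.
have Hc := Hclaim t (conj Ht0 Ht1).
have Htb : t * b < 2 * del.
  have : t * (b + 1) <= del.
    have -> : del = del / (b + 1) * (b + 1) by field; lra.
    apply: Rmult_le_compat_r; lra.
  nra.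
have Hdq : del = fx + (dot e d - dot c (mv (jac z) d)) - fy by [].
clearbody t del b.
move: Hc Hdq; move: (dot e d - dot c (mv (jac z) d)) => qd Hc Hdq.
have : t * (t * b) < t * (2 * del) by apply: Rmult_lt_compat_l.
have E : t ^ 2 / 2 * b = / 2 * (t * (t * b)) by simpl; field.
rewrite E in Hc; nra.
Qed.
Lemma Jfun_fin {N M} (F : vec N -> Rbar) (A : vec N -> vec M) x j :
  Jfun A F x = Fin j -> exists f, F x = Fin f /\ j = / 2 * norm (A x) ^ 2 + f.
Proof. rewrite /Jfun; case: (F x) => [f|] //= [<-]; by exists f. Qed.

Lemma Jlin_fin {N M} (F : vec N -> Rbar) (A : vec N -> vec M) jac z x j :
  Jlin A jac F z x = Fin j -> exists f, F x = Fin f /\ j = / 2 * norm (linA A jac z x) ^ 2 + f.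
Proof. rewrite /Jlin; case: (F x) => [f|] //= [<-]; by exists f. Qed.

Lemma descent {N M} (F : vec N -> Rbar) (A : vec N -> vec M) jac
  (z xt e : vec N) (Gam : mat N N) (d C Amax infF rho beta eps w jz jz0 : R) :
  convex_fun F ->
  hypA A jac F rho beta z xt e Gam ->
  Jfun A F z = Fin jz -> jz <= jz0 ->
  (forall x, in_dom F x -> norm (vsub x z) <= d ->
     norm (vsub (vsub (A x) (A z)) (mv (jac z) (vsub x z))) <= C * norm (vsub x z) ^ 2) ->
  (forall x, Rbar_le (Fin infF) (F x)) ->
  (forall x, in_dom F x -> norm (A x) <= Amax) ->
  0 < rho -> 0 < beta -> 0 < eps -> 0 < C -> 0 < w <= 1 ->
  w * sqrt ((2 / beta) * (jz0 - infF)) <= d ->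
  2 * C * Amax * w <= beta - eps ->
  exists jzn jl,
    Jfun A F (vadd (vscale (1 - w) z) (vscale w xt)) = Fin jzn /\
    Jlin A jac F z xt = Fin jl /\
    infF <= jl /\ beta / 2 * norm (vsub xt z) ^ 2 + jl <= jz /\
    jzn <= (1 - w) * jz + w * jl + C * Amax * w ^ 2 * norm (vsub xt z) ^ 2 /\
    jzn <= jz - w * eps / 2 * norm (vsub xt z) ^ 2.
Proof.
move=> Hconv Hh Jz Hjz0 Hlin Hinf Hamax Hr Hb He HC Hw Hd Hpar.
have HpA := @partA _ _ F A jac rho beta z xt e Gam Hr Hb Hh.
case: Hh => Hzd [[jl [Hjl Hsub]] _].
rewrite Jz Hjl in HpA; cbn [Rbar_addR Rbar_le] in HpA.
case: (Jlin_fin _ _ _ _ _ _ Hjl) => fx [Fxt Ejl].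
case: (Jfun_fin _ _ _ _ Jz) => fz [Fz Ejz].
set zn := vadd (vscale (1 - w) z) (vscale w xt).
set h := vsub xt z in HpA *.
have Hinfl : infF <= jl.
  have := Hinf xt; rewrite Fxt /= => H.
  have := pow2_ge_0 (norm (linA A jac z xt)); lra.
have Hnh := norm_ge0 h.
have Hh2 : norm h ^ 2 <= 2 / beta * (jz0 - infF).
  apply: (Rmult_le_reg_l (beta / 2)); first lra.
  have -> : beta / 2 * (2 / beta * (jz0 - infF)) = jz0 - infF by field; lra.
  lra.
have Hwnh : w * norm h <= d.
  apply: Rle_trans Hd; apply: Rmult_le_compat_l; first lra.
  rewrite -(sqrt_pow2 (norm h)) //; exact: sqrt_le_1_alt.
have Hc := Hconv z xt fz fx (1 - w) Fz Fxt (conj (ltac:(lra) : 0 <= 1 - w) (ltac:(lra) : 1 - w <= 1)).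
have Ew : 1 - (1 - w) = w by ring.
rewrite Ew -/zn in Hc.
case Fzn: (F zn) Hc => [fzn|] // Hc; cbn [Rbar_le] in Hc.
have Hznd : in_dom F zn by rewrite /in_dom Fzn.
have Ezn : vsub zn z = vscale w h.
  by apply: vext => i; rewrite /zn /h /vsub /vadd /vscale; ring.
have Hnzn : norm (vsub zn z) = w * norm h.
  by rewrite Ezn norm_scale Rabs_right; lra.
have Hl := Hlin zn Hznd (ltac:(rewrite Hnzn; exact: Hwnh)).
rewrite Hnzn in Hl.
set a := A zn in Hl *.
set b := linA A jac z zn.
have Eab : vsub (vsub a (A z)) (mv (jac z) (vsub zn z)) = vsub a b.
  by apply: vext => i; rewrite /b /linA /vsub /vadd; ring.
rewrite Eab in Hl.
have Ha : norm a <= Amax by apply: Hamax.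
have Hab : / 2 * norm a ^ 2 <= / 2 * norm b ^ 2 + norm a * norm (vsub a b).
  have E : norm a ^ 2 = norm b ^ 2 + 2 * dot a (vsub a b) - norm (vsub a b) ^ 2.
    rewrite !norm_sq !dot_subl !dot_subr (dot_sym b a); ring.
  rewrite E; have := CS a (vsub a b); have := pow2_ge_0 (norm (vsub a b)); lra.
have Eb : b = vadd (A z) (vscale w (mv (jac z) h)) by rewrite /b /linA Ezn mv_scale.
have Ec : linA A jac z xt = vadd (A z) (mv (jac z) h) by [].
have Hbb : / 2 * norm b ^ 2 <= (1 - w) * (/ 2 * norm (A z) ^ 2) + w * (/ 2 * norm (linA A jac z xt) ^ 2).
  rewrite Eb Ec !norm_vadd_sq norm_scale dot_scalr Rabs_right; last lra.
  have := pow2_ge_0 (norm (mv (jac z) h)).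
  move: (norm (mv (jac z) h)) (dot (A z) (mv (jac z) h)) (norm (A z)) => p q r Hp.
  have : 0 <= w * (1 - w) * p ^ 2 by apply: Rmult_le_pos; nra.
  nra.
have Hna := norm_ge0 a.
have Hnab := norm_ge0 (vsub a b).
have Hamax0 : 0 <= Amax by lra.
have Hprod : norm a * norm (vsub a b) <= Amax * (C * (w * norm h) ^ 2).
  apply: Rle_trans (_ : norm a * norm (vsub a b) <= Amax * norm (vsub a b)) _.
    by apply: Rmult_le_compat_r.
  by apply: Rmult_le_compat_l.
exists (/ 2 * norm a ^ 2 + fzn), jl; split.
  by rewrite /Jfun -/a Fzn.
split => //; split => //; split; first lra.
have Hmain : / 2 * norm a ^ 2 + fzn <= (1 - w) * jz + w * jl + C * Amax * w ^ 2 * norm h ^ 2.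
  rewrite Ejz Ejl.
  have -> : C * Amax * w ^ 2 * norm h ^ 2 = Amax * (C * (w * norm h) ^ 2) by ring.
  lra.
split => //.
apply: Rle_trans Hmain _.
have : 0 <= w * norm h ^ 2 * (beta - eps - 2 * C * Amax * w).
  apply: Rmult_le_pos; last lra.
  apply: Rmult_le_pos; [lra| exact: pow2_ge_0].
nra.
Qed.
Definition Rv (x : Rbar) : R := match x with Fin r => r | PInf => 0 end.

Lemma Rv_fin x r : x = Fin r -> Rv x = r.
Proof. by move=> ->. Qed.

Lemma cv_squeeze_ev (u v : nat -> R) K : (forall k, (K <= k)%nat -> 0 <= u k <= v k) ->
  Un_cv v 0 -> Un_cv u 0.
Proof.
move=> H Hv eps He; case: (Hv eps He) => K0 HK; exists (maxn K K0) => k /leP Hk.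
have Hk1 : (K <= k)%nat by apply: leq_trans Hk; apply: leq_maxl.
have Hk2 : (k >= K0)%coq_nat by apply/leP; apply: leq_trans Hk; apply: leq_maxr.
have := HK k Hk2; rewrite /R_dist !Rminus_0_r => h2; have h1 := H k Hk1.
rewrite Rabs_right in h2; last lra. rewrite Rabs_right; lra.
Qed.

Lemma cv_sq (u : nat -> R) : (forall k, 0 <= u k) -> Un_cv (fun k => u k ^ 2) 0 -> Un_cv u 0.
Proof.
move=> H0 H eps He; case: (H (eps ^ 2) (ltac:(nra))) => K HK; exists K => k Hk.
have h := HK k Hk; rewrite /R_dist !Rminus_0_r in h |- *. have hk := H0 k.
rewrite Rabs_right in h; last (apply: Rle_ge; nra).
rewrite Rabs_right; last lra. nra.
Qed.

Lemma cv_shift (u : nat -> R) l : Un_cv u l -> Un_cv (fun k => u k.+1) l.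
Proof. by move=> H; apply: (cv_subseq u l S) => // k. Qed.

Lemma cv_unique_le (u : nat -> R) a b : Un_cv u a -> (forall k, u k <= b) -> a <= b.
Proof.
move=> H Hb; apply: Rnot_lt_le => Hlt.
case: (H (a - b) (ltac:(lra))) => K HK; have := HK K (le_n K); have := Hb K.
rewrite /R_dist => h1 /Rabs_def2 h2; lra.
Qed.

Lemma cv_ge_lim (u : nat -> R) l eps : Un_cv u l -> 0 < eps ->
  exists K, forall k, (K <= k)%nat -> Rabs (u k - l) < eps.
Proof. move=> H He; case: (cv_ge u l 0%nat eps H He) => K [_ HK]; by exists K. Qed.
Lemma cv_dot {n} (u v : nat -> vec n) (a b : vec n) :
  (forall i, Un_cv (fun k => u k i) (a i)) -> (forall i, Un_cv (fun k => v k i) (b i)) ->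
  Un_cv (fun k => dot (u k) (v k)) (dot a b).
Proof.
move=> Hu Hv; rewrite /dot.
apply: (cv_sum _ (fun k i => u k i * v k i) (fun i => a i * b i)) => i.
exact: CV_mult.
Qed.

Lemma vcv_lt {n} (u : nat -> vec n) x del : vcv u x -> 0 < del ->
  exists K, forall k, (K <= k)%nat -> norm (vsub (u k) x) < del.
Proof.
move=> H Hd; case: (cv_ge_lim _ _ _ H Hd) => K HK; exists K => k Hk.
have := HK k Hk; rewrite Rminus_0_r Rabs_right //; apply: Rle_ge; exact: norm_ge0.
Qed.

Lemma norm_le_sub {n} (u v : vec n) : norm u <= norm (vsub u v) + norm v.
Proof.
have E : u = vadd (vsub u v) v by apply: vext => i; rewrite /vsub /vadd; ring.
rewrite {1}E; exact: norm_add.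
Qed.

Lemma coord_cv0 {n} (u : nat -> vec n) (r : nat -> R) : Un_cv r 0 ->
  (forall k, norm (u k) <= r k) -> forall i, Un_cv (fun k => u k i) 0.
Proof.
move=> Hr H i; apply/cv_abs_le; apply: (cv_squeeze_ev _ _ 0 _ Hr) => k _.
rewrite Rminus_0_r; split; [exact: Rabs_pos| exact: Rle_trans (coord_le _ _) (H k)].
Qed.
Section MainB.
Context {N M : nat} (F : vec N -> Rbar) (A : vec N -> vec M) (jac : vec N -> mat M N).
Hypothesis HFconv : convex_fun F.
Hypothesis HFlsc : lsc_fun F.
Hypothesis HA : C1_on_dom F A jac.
Variables (z0 : vec N) (d C Amax infF rho beta eps w : R)
          (z xt e : nat -> vec N) (Gam : nat -> mat N N).
Hypothesis Hz0 : in_dom F z0.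
Hypothesis Hbnd : bounded_set (fun x => Rbar_le (Jfun A F x) (Jfun A F z0)).
Hypothesis Hinf : is_inf_of F infF.
Hypothesis Hsup : is_sup_normA F A Amax.
Hypothesis Hd : 0 < d.
Hypothesis HC : 0 < C.
Hypothesis Hlin : forall y x : vec N, Rbar_le (Jfun A F y) (Jfun A F z0) -> in_dom F x ->
        norm (vsub x y) <= d ->
        norm (vsub (vsub (A x) (A y)) (mv (jac y) (vsub x y))) <= C * norm (vsub x y) ^ 2.
Hypothesis Hr : 0 < rho.
Hypothesis Hb : 0 < beta.
Hypothesis Heps : 0 < eps < beta.
Hypothesis Hw : 0 < w <= 1.
Hypothesis Hdw : forall Jz0 : R, Jfun A F z0 = Fin Jz0 -> w * sqrt ((2 / beta) * (Jz0 - infF)) <= d.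
Hypothesis Hpar : 2 * C * Amax * w <= beta - eps.
Hypothesis Hzz0 : z 0%nat = z0.
Hypothesis Hrec : forall k, z (S k) = vadd (vscale (1 - w) (z k)) (vscale w (xt k)).
Hypothesis Hhyp : forall k, hypA A jac F rho beta (z k) (xt k) (e k) (Gam k).

Definition jz0 := Rv (Jfun A F z0).
Definition jzf k := Rv (Jfun A F (z k)).
Definition jlf k := Rv (Jlin A jac F (z k) (xt k)).
Definition nh k := norm (vsub (xt k) (z k)).

Lemma weps_pos k : 0 <= w * eps / 2 * nh k ^ 2.
Proof.
apply: Rmult_le_pos; last exact: pow2_ge_0.
have := Hw; have := Heps; move=> [? ?] [? ?].
apply: Rmult_le_pos; [apply: Rmult_le_pos|]; lra.
Qed.

Lemma J0 : Jfun A F z0 = Fin jz0.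
Proof. case: (dom_fin _ _ Hz0) => f Hf; by rewrite /jz0 /Jfun Hf. Qed.

Lemma stepk k jz : Jfun A F (z k) = Fin jz -> jz <= jz0 ->
  exists jzn jl,
    Jfun A F (z k.+1) = Fin jzn /\
    Jlin A jac F (z k) (xt k) = Fin jl /\
    infF <= jl /\ beta / 2 * nh k ^ 2 + jl <= jz /\
    jzn <= (1 - w) * jz + w * jl + C * Amax * w ^ 2 * nh k ^ 2 /\
    jzn <= jz - w * eps / 2 * nh k ^ 2.
Proof.
move=> Hj Hle.
rewrite Hrec.
apply: (@descent N M F A jac (z k) (xt k) (e k) (Gam k) d C Amax infF rho beta eps w jz jz0) => //.
- move=> x Hx Hn; apply: Hlin => //; rewrite Hj J0 /=; lra.
- exact: (proj1 Hinf).
- exact: (proj1 Hsup).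
- lra.
- exact: Hdw J0.
Qed.

Lemma inv k : Jfun A F (z k) = Fin (jzf k) /\ jzf k <= jz0.
Proof.
elim: k => [|k [IH1 IH2]].
  rewrite /jzf Hzz0 J0 /=; split; [done|lra].
case: (stepk _ _ IH1 IH2) => jzn [jl [H1 [_ [_ [H2 [_ H3]]]]]].
rewrite /jzf H1 /=; split => //.
have := weps_pos k; lra.
Qed.

Lemma step k :
    Jlin A jac F (z k) (xt k) = Fin (jlf k) /\
    infF <= jlf k /\ beta / 2 * nh k ^ 2 + jlf k <= jzf k /\
    jzf k.+1 <= (1 - w) * jzf k + w * jlf k + C * Amax * w ^ 2 * nh k ^ 2 /\
    jzf k.+1 <= jzf k - w * eps / 2 * nh k ^ 2.
Proof.
case: (inv k) => H1 H2.
case: (stepk _ _ H1 H2) => jzn [jl [E1 [E2 H]]].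
rewrite /jlf /jzf E1 E2 /=; rewrite /jzf H1 /= in H; split => //.
Qed.

Lemma jz_decr k : jzf k.+1 <= jzf k.
Proof. case: (step k) => _ [_ [_ [_ H]]]; have := weps_pos k; lra. Qed.

Lemma jz_lb k : infF <= jzf k.
Proof. case: (step k) => _ [H1 [H2 _]]; have := pow2_ge_0 (nh k); nra. Qed.

Lemma jz_cv : { L | Un_cv jzf L }.
Proof.
apply: decreasing_cv; first by move=> k; exact: jz_decr.
exists (- infF) => x [k ->]; rewrite /opp_seq; have := jz_lb k; lra.
Qed.

Definition L := proj1_sig jz_cv.
Lemma HL : Un_cv jzf L.
Proof. exact: proj2_sig jz_cv. Qed.

Lemma nh_cv : Un_cv nh 0.
Proof.
apply: cv_sq => [k|]; first exact: norm_ge0.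
apply: (cv_squeeze_ev _ (fun k => 2 / (w * eps) * (jzf k - jzf k.+1)) 0).
  move=> k _; split; first exact: pow2_ge_0.
  case: (step k) => _ [_ [_ [_ H]]].
  have Hwe : 0 < w * eps by have := Hw; have := Heps; nra.
  apply: (Rmult_le_reg_l (w * eps / 2)); first lra.
  have -> : w * eps / 2 * (2 / (w * eps) * (jzf k - jzf k.+1)) = jzf k - jzf k.+1 by field; lra.
  lra.
have -> : 0 = 2 / (w * eps) * (L - L) by ring.
apply: CV_mult; first exact: cv_const.
apply: CV_minus; [exact: HL | exact: cv_shift HL].
Qed.

Lemma jl_cv : Un_cv jlf L.
Proof.
have H0 : Un_cv (fun k => jzf k - jlf k) 0.
  apply: (cv_squeeze_ev _ (fun k => / w * (jzf k - jzf k.+1 + C * Amax * w ^ 2 * nh k ^ 2)) 0).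
    move=> k _; case: (step k) => _ [_ [H1 [H2 _]]]; split.
      have := pow2_ge_0 (nh k); have := Hb; nra.
    apply: (Rmult_le_reg_l w); first lra.
    rewrite -Rmult_assoc Rinv_r; last lra.
    lra.
  have -> : 0 = / w * (L - L + C * Amax * w ^ 2 * 0 ^ 2) by ring.
  apply: CV_mult; first exact: cv_const.
  apply: CV_plus; first by apply: CV_minus; [exact: HL | exact: cv_shift HL].
  apply: CV_mult; first exact: cv_const.
  apply: (Un_cv_ext (fun k => nh k * nh k)); first by move=> k; simpl; ring.
  have -> : 0 ^ 2 = 0 * 0 by simpl; ring.
  apply: CV_mult; exact: nh_cv.
have -> : L = L - 0 by ring.
apply: (Un_cv_ext (fun k => jzf k - (jzf k - jlf k))); first by move=> k; ring.
apply: CV_minus; [exact: HL | exact: H0].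
Qed.


Definition fxv k := Rv (F (xt k)).

Lemma Fxt k : F (xt k) = Fin (fxv k) /\
   jlf k = / 2 * norm (linA A jac (z k) (xt k)) ^ 2 + fxv k.
Proof.
case: (step k) => H _; case: (Jlin_fin _ _ _ _ _ _ H) => f [Hf E].
by rewrite /fxv Hf.
Qed.

Lemma Fz_le k : exists f, F (z k) = Fin f /\ f <= jz0.
Proof.
case: (inv k) => H1 H2; case: (Jfun_fin _ _ _ _ H1) => f [Hf E].
exists f; split => //; have := pow2_ge_0 (norm (A (z k))); lra.
Qed.

Lemma subgr k y : Rbar_le (Fin (fxv k + dot (qvec A jac (z k) (xt k) (e k)) (vsub y (xt k)))) (F y).
Proof.
case: (Hhyp k) => _ [[gx [HJ Hsub]] _].
apply: (subgrad_F _ _ _ _ _ _ gx) => //; exact: (Fxt k).1.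
Qed.

Lemma accum_props xh : accum_pt z xh ->
  in_dom F xh /\ clarke_critical A jac F xh /\ Jfun A F xh = Fin L.
Proof.
move=> Hacc; case: (accum_extract _ _ Hacc) => phi [Hphi Hcv].
have Hdom : in_dom F xh.
  move=> Hpinf.
  case: (HFlsc xh jz0 (ltac:(by rewrite Hpinf))) => del [Hdel Hn].
  case: (vcv_lt _ _ _ Hcv Hdel) => K HK.
  case: (Fz_le (phi K)) => f [Hf Hfle].
  have := Hn _ (HK K (leqnn _)); rewrite Hf /=; lra.
case: (dom_fin _ _ Hdom) => fh Ffh.
have Hnh : Un_cv (fun k => nh (phi k)) 0 := cv_subseq _ _ _ Hphi nh_cv.
have Hxcv : vcv (fun k => xt (phi k)) xh.
  apply: (cv_squeeze_ev _ (fun k => nh (phi k) + norm (vsub (z (phi k)) xh)) 0).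
    move=> k _; split; first exact: norm_ge0.
    exact: norm_tri.
  have -> : 0 = 0 + 0 by ring.
  exact: CV_plus.
case: HA => HA1 HA2.
have HAcv : vcv (fun k => A (z (phi k))) (A xh).
  case: (HA1 xh Hdom 1 Rlt_0_1) => del1 [Hdel1 H1].
  case: (mv_bound (jac xh)) => K0 [HK0 HK0b].
  case: (vcv_lt _ _ _ Hcv Hdel1) => K HK.
  apply: (cv_squeeze_ev _ (fun k => (1 + K0) * norm (vsub (z (phi k)) xh)) K).
    move=> k Hk; split; first exact: norm_ge0.
    have Hzd : in_dom F (z (phi k)) by case: (Fz_le (phi k)) => f [Hf _]; rewrite /in_dom Hf.
    have := H1 _ Hzd (HK k Hk).
    have := HK0b (vsub (z (phi k)) xh).
    have := norm_le_sub (vsub (A (z (phi k))) (A xh)) (mv (jac xh) (vsub (z (phi k)) xh)).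
    lra.
  have -> : 0 = (1 + K0) * 0 by ring.
  apply: CV_mult; [exact: cv_const| exact: Hcv].
have Hjac : forall i j, Un_cv (fun k => jac (z (phi k)) i j) (jac xh i j).
  move=> i j eps0 He0.
  case: (HA2 xh Hdom eps0 He0) => del [Hdel H2].
  case: (vcv_lt _ _ _ Hcv Hdel) => K HK; exists K => k /leP Hk.
  have Hzd : in_dom F (z (phi k)) by case: (Fz_le (phi k)) => f [Hf _]; rewrite /in_dom Hf.
  exact: H2 _ Hzd (HK k Hk) i j.
have Hh : forall j, Un_cv (fun k => vsub (xt (phi k)) (z (phi k)) j) 0.
  apply: (coord_cv0 _ _ Hnh) => k; exact: Rle_refl.
have He : forall j, Un_cv (fun k => e (phi k) j) 0.
  apply: (coord_cv0 _ (fun k => rho * nh (phi k))).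
    have -> : 0 = rho * 0 by ring.
    apply: CV_mult; [exact: cv_const| exact: Hnh].
  move=> k; by case: (Hhyp (phi k)) => _ [_ [He _]].
have HAc : forall i, Un_cv (fun k => A (z (phi k)) i) (A xh i) := vcv_coord _ _ HAcv.
have Hlin_c : forall i, Un_cv (fun k => linA A jac (z (phi k)) (xt (phi k)) i) (A xh i).
  move=> i; rewrite /linA /vadd.
  have -> : A xh i = A xh i + \big[Rplus/0]_(j < N) (jac xh i j * 0).
    rewrite (_ : \big[Rplus/0]_(j < N) (jac xh i j * 0) = 0) ?Rplus_0_r //.
    by elim/big_rec: _ => [|j y _ ->]; ring.
  apply: CV_plus; first exact: HAc.
  apply: (cv_sum _ (fun k j => jac (z (phi k)) i j * vsub (xt (phi k)) (z (phi k)) j)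
                   (fun j => jac xh i j * 0)) => j.
  exact: CV_mult.
set tgt := vscale (-1) (mtv (jac xh) (A xh)).
have Hq : forall j, Un_cv (fun k => qvec A jac (z (phi k)) (xt (phi k)) (e (phi k)) j) (tgt j).
  move=> j; rewrite /qvec /vsub /tgt /vscale /mtv.
  have -> : -1 * \big[Rplus/0]_(i < M) (jac xh i j * A xh i) =
            0 - \big[Rplus/0]_(i < M) (jac xh i j * A xh i) by ring.
  apply: CV_minus; first exact: He.
  apply: (cv_sum _ (fun k i => jac (z (phi k)) i j * linA A jac (z (phi k)) (xt (phi k)) i)
                   (fun i => jac xh i j * A xh i)) => i.
  exact: CV_mult.
have Hxc : forall i, Un_cv (fun k => xt (phi k) i) (xh i) := vcv_coord _ _ Hxcv.
have Hdq : forall y, Un_cv (fun k => dot (qvec A jac (z (phi k)) (xt (phi k)) (e (phi k)))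
                                        (vsub y (xt (phi k)))) (dot tgt (vsub y xh)).
  move=> y; apply: cv_dot => // i; rewrite /vsub; apply: CV_minus; [exact: cv_const| exact: Hxc].
have Hlow : forall eta, 0 < eta -> exists K, forall k, (K <= k)%nat -> fh - eta < fxv (phi k).
  move=> eta Heta.
  case: (HFlsc xh (fh - eta) (ltac:(rewrite Ffh /=; lra))) => del [Hdel Hn].
  case: (vcv_lt _ _ _ Hxcv Hdel) => K HK; exists K => k Hk.
  have := Hn _ (HK k Hk); by rewrite (Fxt (phi k)).1.
have Hfx : Un_cv (fun k => fxv (phi k)) fh.
  move=> eta Heta.
  case: (Hlow eta Heta) => K1 HK1.
  case: (cv_ge_lim _ _ _ (Hdq xh) Heta) => K2 HK2.
  exists (maxn K1 K2) => k /leP Hk.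
  have Hk1 : (K1 <= k)%nat by apply: leq_trans Hk; apply: leq_maxl.
  have Hk2 : (K2 <= k)%nat by apply: leq_trans Hk; apply: leq_maxr.
  have := HK1 k Hk1; have := HK2 k Hk2.
  have E0 : dot tgt (vsub xh xh) = 0 by rewrite dot_subr; ring.
  rewrite E0 Rminus_0_r => /Rabs_def2 H2 H1.
  have := subgr (phi k) xh; rewrite Ffh /= => H3.
  rewrite /R_dist; apply: Rabs_def1; lra.
split => //; split.
  exists fh; split => // y; rewrite -/tgt.
  case Fy: (F y) => [fy|] //=.
  apply: le_epsilon => eta Heta.
  case: (Hlow (eta / 2) (ltac:(lra))) => K1 HK1.
  case: (cv_ge_lim _ _ _ (Hdq y) (ltac:(lra) : 0 < eta / 2)) => K2 HK2.
  have Hk1 : (K1 <= maxn K1 K2)%nat by apply: leq_maxl.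
  have Hk2 : (K2 <= maxn K1 K2)%nat by apply: leq_maxr.
  have := HK1 _ Hk1; have := HK2 _ Hk2; move=> /Rabs_def2 H2 H1.
  have := subgr (phi (maxn K1 K2)) y; rewrite Fy /= => H3.
  lra.
have Hjl : Un_cv (fun k => jlf (phi k)) L := cv_subseq _ _ _ Hphi jl_cv.
have Hjl2 : Un_cv (fun k => jlf (phi k)) (/ 2 * dot (A xh) (A xh) + fh).
  apply: (Un_cv_ext (fun k => / 2 * dot (linA A jac (z (phi k)) (xt (phi k))) (linA A jac (z (phi k)) (xt (phi k))) + fxv (phi k))).
    by move=> k; rewrite (Fxt (phi k)).2 norm_sq.
  apply: CV_plus => //; apply: CV_mult; first exact: cv_const.
  exact: cv_dot.
have EL := UL_sequence _ _ _ Hjl Hjl2.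
by rewrite /Jfun Ffh /= EL -norm_sq.
Qed.


Lemma zbnd : exists R0, forall k, norm (z k) <= R0.
Proof.
case: Hbnd => R0 HR0; exists R0 => k; apply: HR0.
by rewrite (inv k).1 J0 /=; exact: (inv k).2.
Qed.

Lemma BW_z (Q : nat -> Prop) : (forall K, exists k, (K <= k)%nat /\ Q k) ->
  exists x, accum_pt z x /\
    forall eps, 0 < eps -> forall K, exists k, (K <= k)%nat /\ Q k /\ norm (vsub (z k) x) < eps.
Proof.
move=> HQ; case: zbnd => R0 HR0.
case: (BW_vec z R0 Q HR0 HQ) => x Hx; exists x; split => //.
move=> eps0 He K; case: (Hx eps0 He K) => k [Hk [_ Hn]]; exists k; split => //; exact/leP.
Qed.

Lemma step_cv : Un_cv (fun k => norm (vsub (z k.+1) (z k))) 0.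
Proof.
apply: (Un_cv_ext (fun k => w * nh k)).
  move=> k; rewrite Hrec.
  have -> : vsub (vadd (vscale (1 - w) (z k)) (vscale w (xt k))) (z k) = vscale w (vsub (xt k) (z k)).
    by apply: vext => i; rewrite /vsub /vadd /vscale; ring.
  rewrite norm_scale Rabs_right //; lra.
have -> : 0 = w * 0 by ring.
apply: CV_mult; [exact: cv_const| exact: nh_cv].
Qed.

Lemma accum_closed x : (forall eps, 0 < eps -> exists u, accum_pt z u /\ norm (vsub x u) < eps) ->
  accum_pt z x.
Proof.
move=> H eps0 He K.
case: (H (eps0 / 2) (ltac:(lra))) => u [Hu Hxu].
case: (Hu (eps0 / 2) (ltac:(lra)) K) => k [Hk Hzu]; exists k; split => //.
have := norm_tri (z k) u x; rewrite (norm_opp_sub u x); lra.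
Qed.

Lemma accum_bnd R0 x : (forall k, norm (z k) <= R0) -> accum_pt z x -> norm x <= R0.
Proof.
move=> HR H; apply: le_epsilon => eps0 He.
case: (H eps0 He 0%nat) => k [_ Hk].
have := norm_le_sub x (z k); rewrite (norm_opp_sub x (z k)); have := HR k; lra.
Qed.

Lemma separation (U1 U2 : vec N -> Prop) :
  closed_vset U1 -> closed_vset U2 -> (forall x, ~ (U1 x /\ U2 x)) ->
  exists del, 0 < del /\ forall a b, accum_pt z a -> U1 a -> accum_pt z b -> U2 b ->
    del <= norm (vsub a b).
Proof.
move=> Hc1 Hc2 Hdis.
apply: NNPP => Hne.
have H : forall n : nat, exists p : vec N * vec N, accum_pt z p.1 /\ U1 p.1 /\ accum_pt z p.2 /\
    U2 p.2 /\ norm (vsub p.1 p.2) < / INR n.+1.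
  move=> n; apply: NNPP => Hn; apply: Hne; exists (/ INR n.+1); split.
    apply: Rinv_0_lt_compat; apply: lt_0_INR; apply/ltP; done.
  move=> a b Ha H1 Hbb H2; apply: Rnot_lt_le => Hlt; apply: Hn.
  by exists (a, b).
have H' : forall n, {p : vec N * vec N | accum_pt z p.1 /\ U1 p.1 /\ accum_pt z p.2 /\
    U2 p.2 /\ norm (vsub p.1 p.2) < / INR n.+1}.
  move=> n; apply: constructive_indefinite_description; exact: H.
pose a n := (proj1_sig (H' n)).1.
pose b n := (proj1_sig (H' n)).2.
have Hab n : accum_pt z (a n) /\ U1 (a n) /\ accum_pt z (b n) /\ U2 (b n) /\
    norm (vsub (a n) (b n)) < / INR n.+1 by exact: proj2_sig (H' n).
case: zbnd => R0 HR0.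
case: (BW_vec a R0 (fun _ => True)).
- move=> n; exact: accum_bnd HR0 (Hab n).1.
- by move=> K; exists K.
move=> x Hx.
have Hax : forall eps0, 0 < eps0 -> forall K, exists n, (K <= n)%nat /\ norm (vsub x (a n)) < eps0.
  move=> eps0 He K; case: (Hx eps0 He K) => n [Hn [_ Hn2]]; exists n; split => //.
  by rewrite norm_opp_sub.
apply: (Hdis x); split.
  apply: Hc1 => eps0 He; case: (Hax eps0 He 0%nat) => n [_ Hn].
  exists (a n); split => //; exact: (Hab n).2.1.
apply: Hc2 => eps0 He.
case: (archimed_cor1 (eps0 / 2) (ltac:(lra))) => K0 [HK0 HK0p].
case: (Hax (eps0 / 2) (ltac:(lra)) K0) => n [Hn Hn2].
exists (b n); split; first exact: (Hab n).2.2.2.1.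
have Hbn := (Hab n).2.2.2.2.
have : / INR n.+1 <= / INR K0.
  have h0 : 0 < INR K0 := lt_0_INR _ HK0p.
  apply: Rinv_le_contravar => //.
  rewrite S_INR; have := le_INR _ _ (elimT leP Hn); lra.
have := norm_tri x (a n) (b n); lra.
Qed.

Lemma first_exit (P : nat -> Prop) k m : (k <= m)%nat -> P k -> ~ P m ->
  exists j, (k < j)%nat /\ (j <= m)%nat /\ P j.-1 /\ ~ P j.
Proof.
elim: m => [|m IH] Hkm Pk Pm.
  by move: Hkm; rewrite leqn0 => /eqP Hk; subst k.
case: (classic (P m)) => HPm.
  exists m.+1; split; last by split.
  rewrite ltnS; rewrite leq_eqVlt in Hkm; case/orP: Hkm => [/eqP Hk|//].
  by subst k.
rewrite leq_eqVlt in Hkm; case/orP: Hkm => [/eqP Hk|Hkm].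
  by subst k.
case: (IH Hkm Pk HPm) => j [H1 [H2 H3]]; exists j; split => //; split => //.
exact: leqW.
Qed.

Lemma one_side (U1 U2 : vec N -> Prop) :
  closed_vset U1 -> closed_vset U2 -> (forall x, ~ (U1 x /\ U2 x)) ->
  (forall x, accum_pt z x -> U1 x \/ U2 x) ->
  (exists x1, accum_pt z x1 /\ U1 x1) -> (exists x2, accum_pt z x2 /\ U2 x2) -> False.
Proof.
move=> Hc1 Hc2 Hdis Hall [x1 [Ha1 H1]] [x2 [Ha2 H2]].
case: (separation _ _ Hc1 Hc2 Hdis) => del [Hdel Hsep].
pose S1 y := exists a, accum_pt z a /\ U1 a /\ norm (vsub y a) < del / 3.
pose S2 y := exists b, accum_pt z b /\ U2 b /\ norm (vsub y b) < del / 3.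
have HS12 : forall y, S1 y -> S2 y -> False.
  move=> y [a [Ha [Ua Hya]]] [b [Hbb [Ub Hyb]]].
  have := Hsep a b Ha Ua Hbb Ub; have := norm_tri a y b; rewrite (norm_opp_sub a y); lra.
case: (cv_ge_lim _ _ (del / 3) step_cv (ltac:(lra))) => K0 HK0.
have Hinfj : forall K, exists j, (K <= j)%nat /\ (~ S1 (z j) /\ ~ S2 (z j)).
  move=> K.
  case: (Ha1 (del / 3) (ltac:(lra)) (maxn K K0)) => k [Hk Hk1];
  case: (Ha2 (del / 3) (ltac:(lra)) k) => m [Hm Hm2];
  have S1k : S1 (z k) by exists x1.
  have S2m : S2 (z m) by exists x2.
  have nS1m : ~ S1 (z m) by move=> H; exact: HS12 H S2m.
  case: (first_exit (fun j => S1 (z j)) _ _ Hm S1k nS1m) => j [Hj1 [Hj2 [Hj3 Hj4]]].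
  exists j; split.
    apply: leq_trans (leq_maxl K K0) _; apply: leq_trans Hk _; exact: ltnW.
  split => // [[b [Hbb [Ub Hjb]]]].
  case: Hj3 => a [Ha [Ua Hja]].
  have Hj0 : (0 < j)%nat by exact: leq_ltn_trans (leq0n k) Hj1.
  have Hkj : (k <= j.-1)%nat by rewrite -ltnS prednK.
  have Hstep := HK0 j.-1 (leq_trans (leq_maxr K K0) (leq_trans Hk Hkj)).
  rewrite prednK // Rminus_0_r Rabs_right in Hstep; last (apply: Rle_ge; exact: norm_ge0).
  have := Hsep a b Ha Ua Hbb Ub.
  have := norm_tri a (z j.-1) (z j); have := norm_tri a (z j) b.
  rewrite (norm_opp_sub a (z j.-1)) (norm_opp_sub (z j.-1) (z j)) (norm_opp_sub a (z j)).
  lra.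
case: (BW_z _ Hinfj) => x [Hx Hxz].
case: (Hall x Hx) => Hux.
  case: (Hxz (del / 3) (ltac:(lra)) 0%nat) => k [_ [[HQ _] Hk]]; apply: HQ; by exists x.
case: (Hxz (del / 3) (ltac:(lra)) 0%nat) => k [_ [[_ HQ] Hk]]; apply: HQ; by exists x.
Qed.


Lemma dist_ok (U : vec N -> Prop) : (forall x, accum_pt z x -> U x) -> dist_to_0 z U.
Proof.
move=> HU eps0 He; apply: NNPP => Hne.
have HQ : forall K, exists k, (K <= k)%nat /\ ~ (exists u, U u /\ norm (vsub (z k) u) < eps0).
  move=> K; apply: NNPP => HK; apply: Hne; exists K => k Hk.
  apply: NNPP => Hk2; apply: HK; by exists k.
case: (BW_z _ HQ) => x [Hx Hxz].
case: (Hxz eps0 He 0%nat) => k [_ [HQk Hk]]; apply: HQk; exists x; split => //; exact: HU.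
Qed.

Lemma partB_main : exists L : R,
       (forall k, Rbar_le (Jfun A F (z (S k))) (Jfun A F (z k))) /\
       Rbar_cv (fun k => Jfun A F (z k)) L /\
       (forall xh, accum_pt z xh ->
          clarke_critical A jac F xh /\ Jfun A F xh = Fin L) /\
       (forall U1 U2 : vec N -> Prop,
          closed_vset U1 -> closed_vset U2 -> (forall x, ~ (U1 x /\ U2 x)) ->
          (forall x, (in_dom F x /\ clarke_critical A jac F x /\ Jfun A F x = Fin L)
                     <-> (U1 x \/ U2 x)) ->
          ((forall xh, accum_pt z xh -> U1 xh) /\ dist_to_0 z U1) \/
          ((forall xh, accum_pt z xh -> U2 xh) /\ dist_to_0 z U2)).
Proof.
exists L; split; last split; last split.
- move=> k; rewrite (inv k.+1).1 (inv k).1 /=; exact: jz_decr.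
- move=> eps0 He; case: (HL eps0 He) => K HK; exists K => k Hk.
  exists (jzf k); split; first exact: (inv k).1.
  exact: HK k (elimT leP Hk).
- by move=> xh Hx; case: (accum_props xh Hx) => _ H.
move=> U1 U2 Hc1 Hc2 Hdis Hiff.
have Hall : forall x, accum_pt z x -> U1 x \/ U2 x.
  by move=> x Hx; apply/Hiff; exact: accum_props.
case: (classic (exists x1, accum_pt z x1 /\ U1 x1)) => H1.
  left.
  have HU : forall xh, accum_pt z xh -> U1 xh.
    move=> xh Hx; case: (Hall xh Hx) => // H2.
    exfalso; apply: (one_side _ _ Hc1 Hc2 Hdis Hall H1); by exists xh.
  split => //; exact: dist_ok.
right.
have HU : forall xh, accum_pt z xh -> U2 xh.
  move=> xh Hx; case: (Hall xh Hx) => // H2.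
  by exfalso; apply: H1; exists xh.
split => //; exact: dist_ok.
Qed.

End MainB.

From mathcomp Require Import all_boot.
From Stdlib Require Import Reals.
Local Open Scope R_scope.

Theorem lemmaA1 (N M : nat) (F : vec N -> Rbar) (A : vec N -> vec M)
  (jac : vec N -> mat M N)
  (HFconv : convex_fun F) (HFproper : proper_fun F) (HFlsc : lsc_fun F)
  (HA : C1_on_dom F A jac) :
  (* (a) *)
  (forall (rho beta : R) (z xt e : vec N) (Gam : mat N N),
     0 < rho -> 0 < beta ->
     hypA A jac F rho beta z xt e Gam ->
     Rbar_le (Rbar_addR (beta / 2 * norm (vsub xt z) ^ 2) (Jlin A jac F z xt))
             (Jfun A F z))
  /\
  (* (b) *)
  (forall (z0 : vec N) (d C Amax infF rho beta eps w : R)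
          (z xt e : nat -> vec N) (Gam : nat -> mat N N),
     in_dom F z0 ->
     (* Assumption 2.1 for z0 *)
     bounded_set (fun x => Rbar_le (Jfun A F x) (Jfun A F z0)) ->
     is_inf_of F infF ->
     is_sup_normA F A Amax ->
     0 < d -> 0 < C ->
     (forall y x : vec N, Rbar_le (Jfun A F y) (Jfun A F z0) -> in_dom F x ->
        norm (vsub x y) <= d ->
        norm (vsub (vsub (A x) (A y)) (mv (jac y) (vsub x y))) <= C * norm (vsub x y) ^ 2) ->
     (* parameters *)
     0 < rho -> 0 < beta -> 0 < eps < beta ->
     0 < w <= 1 ->
     (forall Jz0 : R, Jfun A F z0 = Fin Jz0 ->
        w * sqrt ((2 / beta) * (Jz0 - infF)) <= d) ->
     2 * C * Amax * w <= beta - eps ->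
     (* iteration *)
     z 0%nat = z0 ->
     (forall k, z (S k) = vadd (vscale (1 - w) (z k)) (vscale w (xt k))) ->
     (forall k, hypA A jac F rho beta (z k) (xt k) (e k) (Gam k)) ->
     exists L : R,
       (forall k, Rbar_le (Jfun A F (z (S k))) (Jfun A F (z k))) /\
       Rbar_cv (fun k => Jfun A F (z k)) L /\
       (forall xh, accum_pt z xh ->
          clarke_critical A jac F xh /\ Jfun A F xh = Fin L) /\
       (forall U1 U2 : vec N -> Prop,
          closed_vset U1 -> closed_vset U2 -> (forall x, ~ (U1 x /\ U2 x)) ->
          (forall x, (in_dom F x /\ clarke_critical A jac F x /\ Jfun A F x = Fin L)
                     <-> (U1 x \/ U2 x)) ->
          ((forall xh, accum_pt z xh -> U1 xh) /\ dist_to_0 z U1) \/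
          ((forall xh, accum_pt z xh -> U2 xh) /\ dist_to_0 z U2))).
Proof.
split.
- move=> rho beta z xt e Gam Hr Hb H.
  exact: (@partA _ _ F A jac rho beta z xt e Gam Hr Hb H).
- move=> z0 d C Amax infF rho beta eps w z xt e Gam Hz0 Hbnd Hinf Hsup Hd HC Hlin
    Hr Hb Heps Hw Hdw Hpar Hzz0 Hrec Hhyp.
  exact: (@partB_main N M F A jac HFconv HFlsc HA z0 d C Amax infF rho beta eps w z xt e Gam
    Hz0 Hbnd Hinf Hsup HC Hlin Hr Hb Heps Hw Hdw Hpar Hzz0 Hrec Hhyp).
Qed.
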